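(* Let $H\in\mathbb{R}^{\ell\times\ell}$ be symmetric, $0\neq g_0\in\mathbb{R}^{\ell}$ and $\gamma>0$. Consider the quadratic eigenvalue problem (QEP) $(H-\lambda I)^2w=\gamma^{-2}g_0g_0^{\top}w$, where an eigenvalue is a $\lambda\in\mathbb{C}$ for which there is a nonzero $w\in\mathbb{C}^{\ell}$ satisfying this equation. Then the leftmost eigenvalue of this QEP (the one with the smallest real part) is real. As a consequence, the optimal value $\lambda_*$ of the problem pQEPmin — minimize $\lambda$ over $\lambda\in\mathbb{R}$ and $0\ne w\in\mathbb{R}^\ell$ with $(H-\lambda I)^2w=\gamma^{-2}g_0g_0^{\top}w$ — is the leftmost eigenvalue of this QEP. *)

(* Defs.v *)
(* real closed field R (covers the reals), complex numbers R[i]. *)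
From HB Require Import structures.
From mathcomp Require Import all_boot all_order all_algebra.
From mathcomp Require Export complex.
Set Implicit Arguments. Unset Strict Implicit. Unset Printing Implicit Defensive.
Import Order.TTheory GRing.Theory Num.Theory.
Local Open Scope ring_scope.

Definition toCmx (R : rcfType) (m n : nat) (A : 'M[R]_(m, n)) : 'M[R[i]]_(m, n) :=
  map_mx (fun x : R => Complex x 0) A.

Definition qep_eigenvalue (R : rcfType) (l : nat) (H : 'M[R]_l) (g0 : 'cV[R]_l)
    (gamma : R) (lam : R[i]) : Prop :=
  exists w : 'cV[R[i]]_l, w != 0 /\
    (toCmx H - lam%:M) *m (toCmx H - lam%:M) *m w
      = (Complex (gamma ^-2) 0) *: (toCmx g0 *m (toCmx g0)^T *m w).

Definition pqep_feasible (R : rcfType) (l : nat) (H : 'M[R]_l) (g0 : 'cV[R]_l)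
    (gamma : R) (lam : R) : Prop :=
  exists w : 'cV[R]_l, w != 0 /\
    (H - lam%:M) *m (H - lam%:M) *m w = (gamma ^-2) *: (g0 *m g0^T *m w).

(* Main.v *)
Require Import Defs.
From HB Require Import structures.
From mathcomp Require Import all_boot all_order all_algebra.
From mathcomp Require Import complex polyrcf spectral sesquilinear.
From mathcomp Require Import ring lra.
From Stdlib Require Import Classical_Prop.
Set Implicit Arguments. Unset Strict Implicit. Unset Printing Implicit Defensive.
Import Order.TTheory GRing.Theory Num.Theory.
Import ComplexField.Normc.
Local Open Scope ring_scope.
Local Open Scope complex_scope.
Local Open Scope sesquilinear_scope.
Section Scal2.
Variable R : rcfType.
Variables (l : nat) (d a : 'I_l -> R) (c : R).
Hypothesis c_gt0 : 0 < c.

Definition ff (t : R) := c * \sum_i a i ^+ 2 / (d i - t) ^+ 2.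
Definition pP : {poly R} := \prod_i ((d i)%:P - 'X) ^+ 2 -
   \sum_i (c * a i ^+ 2) *: \prod_(j | j != i) ((d j)%:P - 'X) ^+ 2.

Lemma hornerP t : pP.[t] = \prod_i (d i - t) ^+ 2 -
   \sum_i (c * a i ^+ 2) * \prod_(j | j != i) (d j - t) ^+ 2.
Proof.
rewrite /pP hornerD hornerN horner_prod horner_sum.
congr (_ - _).
  by apply: eq_bigr => i _; rewrite horner_exp !hornerE.
apply: eq_bigr => i _; rewrite hornerZ horner_prod; congr (_ * _).
by apply: eq_bigr => j _; rewrite horner_exp !hornerE.
Qed.
Lemma CS_sum (l0 : nat) (u v : 'I_l0 -> R) :
  (\sum_i u i * v i) ^+ 2 <= (\sum_i u i ^+ 2) * (\sum_i v i ^+ 2).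
Proof.
set A := \sum_i u i ^+ 2; set B := \sum_i v i ^+ 2; set P := \sum_i u i * v i.
have A0 : 0 <= A by apply: sumr_ge0 => i _; exact: sqr_ge0.
have B0 : 0 <= B by apply: sumr_ge0 => i _; exact: sqr_ge0.
have key : forall x, 0 <= A * x ^+ 2 + 2 * P * x + B.
  move=> x.
  have -> : A * x ^+ 2 + 2 * P * x + B = \sum_i (u i * x + v i) ^+ 2.
    rewrite /A /B /P mulr_suml mulr_sumr mulr_suml -!big_split /=.
    by apply: eq_bigr => i _; ring.
  by apply: sumr_ge0 => i _; exact: sqr_ge0.
have [A_eq0|A_gt0] := eqVneq A 0.
  have u0 : forall i, u i = 0.
    move=> i; have := A_eq0; rewrite /A => /eqP; rewrite psumr_eq0 => [/allP H|j _]; last exact: sqr_ge0.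
    by have /(_ (mem_index_enum i)) := H i; rewrite implyTb sqrf_eq0 => /eqP.
  have -> : P = 0 by rewrite /P big1 // => i _; rewrite u0 mul0r.
  by rewrite expr0n /= mulr_ge0.
have Apos : 0 < A by rewrite lt0r A_gt0.
have := key (- P / A).
have -> : A * (- P / A) ^+ 2 + 2 * P * (- P / A) + B = B - P ^+ 2 / A.
  by field; rewrite A_gt0.
rewrite subr_ge0 ler_pdivrMr // => h.
by rewrite mulrC.
Qed.

Lemma pP_f t : (forall i, t < d i) ->
  pP.[t] = (\prod_i (d i - t) ^+ 2) * (1 - ff t).
Proof.
move=> ht; rewrite hornerP mulrBr mulr1; congr (_ - _).
rewrite /ff mulrA mulr_sumr; apply: eq_bigr => i _.
rewrite [in RHS](bigD1 i) //=.
have : d i - t != 0 by rewrite subr_eq0 gt_eqF.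
move=> hne; by field.
Qed.

Lemma prod_pos t : (forall i, t < d i) -> 0 < \prod_i (d i - t) ^+ 2.
Proof.
move=> ht; apply: prodr_gt0 => i _; apply: exprn_gt0; by rewrite subr_gt0.
Qed.

Lemma CSf t : (forall i, t < d i) -> ff t <= 1 -> forall b : 'I_l -> R,
  c * (\sum_i a i * b i) ^+ 2 <= \sum_i (d i - t) ^+ 2 * b i ^+ 2.
Proof.
move=> ht hf b.
have hne : forall i, d i - t != 0 by move=> i; rewrite subr_eq0 gt_eqF.
have := CS_sum (fun i => a i / (d i - t)) (fun i => (d i - t) * b i).
have -> : \sum_i a i / (d i - t) * ((d i - t) * b i) = \sum_i a i * b i.
  by apply: eq_bigr => i _; field; exact: hne.
have -> : \sum_i (a i / (d i - t)) ^+ 2 = \sum_i a i ^+ 2 / (d i - t) ^+ 2.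
  by apply: eq_bigr => i _; rewrite expr_div_n.
have -> : \sum_i ((d i - t) * b i) ^+ 2 = \sum_i (d i - t) ^+ 2 * b i ^+ 2.
  by apply: eq_bigr => i _; rewrite exprMn.
set S1 := \sum_i a i ^+ 2 / _; set S2 := \sum_i _ * _ ^+ 2.
have S2ge0 : 0 <= S2 by apply: sumr_ge0 => i _; apply: mulr_ge0; exact: sqr_ge0.
move=> h.
apply: (le_trans (ler_wpM2l (ltW c_gt0) h)).
rewrite mulrA; have : ff t = c * S1 by [].
move=> <-; rewrite -[leRHS]mul1r; exact: ler_wpM2r.
Qed.

Lemma lim_lemma (X P Q N : R) : 0 <= Q -> 0 <= N ->
  (forall s, 0 < s -> X <= P + s * (2 * Q + s * N)) -> X <= P.
Proof.
move=> Q0 N0 h; rewrite leNgt; apply/negP => hXP.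
set D := X - P; have D0 : 0 < D by rewrite subr_gt0.
set M := 2 * Q + N + 1; have M0 : 0 < M by rewrite /M; lra.
set s := D / (M + D).
have s0 : 0 < s by apply: divr_gt0; lra.
have s1 : s <= 1 by rewrite ler_pdivrMr; lra.
have sM : s * M < D.
  rewrite /s mulrAC ltr_pdivrMr; last lra.
  by rewrite ltr_pM2l // ltrDl.
have := h s s0.
have : s * (2 * Q + s * N) <= s * (2 * Q + N).
  apply: ler_wpM2l; first lra.
  rewrite lerD2l -[leRHS]mul1r; exact: ler_wpM2r.
rewrite /D in sM; rewrite /M in sM. nra.
Qed.
Hypothesis a_ge0 : forall i, 0 <= a i.

Lemma ff_ge_term t i : (forall j, t < d j) -> c * (a i ^+ 2 / (d i - t) ^+ 2) <= ff t.
Proof.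
move=> ht; rewrite /ff; apply: ler_wpM2l; first exact: ltW.
rewrite (bigD1 i) //= lerDl; apply: sumr_ge0 => j _.
by apply: divr_ge0; exact: sqr_ge0.
Qed.

Lemma exists_s (k : 'I_l) (hk : forall i, d k <= d i) :
 exists s, (forall i, s <= d i) /\
   (forall b : 'I_l -> R, (forall i, 0 <= b i) ->
      c * (\sum_i a i * b i) ^+ 2 <= \sum_i (d i - s) ^+ 2 * b i ^+ 2) /\
   (((forall i, s < d i) /\ ff s = 1) \/ (s = d k /\ forall i, d i = s -> a i = 0)).
Proof.
have [[t0 [ht0 hP0]]|hB] := Classical_Prop.classic (exists t, t < d k /\ pP.[t] <= 0).
  set K := 1 + c * \sum_i a i ^+ 2.
  have SA : 0 <= \sum_i a i ^+ 2 by apply: sumr_ge0 => i _; exact: sqr_ge0.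
  have cSA : 0 <= c * \sum_i a i ^+ 2 by apply: mulr_ge0 => //; exact: ltW.
  have K1 : 1 <= K by rewrite /K lerDl.
  set T := t0 - K.
  have hT : forall i, K < d i - T.
    move=> i; have := hk i; rewrite /T; lra.
  have hT' : forall i, T < d i by move=> i; have := hT i; lra.
  have fT : ff T < 1.
    apply: (@le_lt_trans _ _ (c * \sum_i (a i ^+ 2 / K))).
      rewrite /ff; apply: ler_wpM2l; first exact: ltW.
      apply: ler_sum => i _.
      apply: ler_wpM2l; first exact: sqr_ge0.
      have hi := hT i.
      rewrite lef_pV2 ?posrE; [nra | | lra].
      by apply: exprn_gt0; lra.
    rewrite -mulr_suml mulrA ltr_pdivrMr; last lra.
    rewrite mul1r /K; lra.
  have PT : 0 < pP.[T].
    by rewrite pP_f // mulr_gt0 ?prod_pos // subr_gt0.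
  have hTt0 : T <= t0 by rewrite /T; lra.
  have hsg : (- pP).[T] <= 0 <= (- pP).[t0].
    by rewrite !hornerN oppr_le0 oppr_ge0 (ltW PT) hP0.
  have [s /andP[sT st0]] := poly_ivt hTt0 hsg.
  rewrite /root hornerN oppr_eq0 => rs.
  have hs : forall i, s < d i by move=> i; have := hk i; lra.
  have fs : ff s = 1.
    move: rs; rewrite pP_f // mulf_eq0 (gt_eqF (prod_pos hs)) /= subr_eq0.
    by move=> /eqP <-.
  exists s; split; first by move=> i; exact: ltW.
  split; last by left.
  by move=> b _; apply: CSf => //; rewrite fs.
have hpos : forall t, t < d k -> ff t < 1.
  move=> t ht.
  have ht' : forall i, t < d i by move=> i; have := hk i; lra.
  have : 0 < pP.[t].
    rewrite ltNge; apply/negP => hle; apply: hB; by exists t.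
  by rewrite pP_f // pmulr_rgt0 ?prod_pos // subr_gt0.
exists (d k); split; first exact: hk.
split; last first.
  right; split => // i hi; apply/eqP; rewrite -sqrf_eq0; apply: contraT => ha.
  have ha2 : 0 < a i ^+ 2 by rewrite lt0r ha sqr_ge0.
  set q := c * a i ^+ 2.
  have q0 : 0 < q by apply: mulr_gt0.
  set sg := q / (1 + q).
  have sg0 : 0 < sg by apply: divr_gt0; lra.
  have sg1 : sg <= 1 by rewrite ler_pdivrMr; lra.
  have sgq : sg <= q by rewrite ler_pdivrMr; [nra | lra].
  have ht : d k - sg < d k by lra.
  have ht' : forall j, d k - sg < d j by move=> j; have := hk j; lra.
  have := ff_ge_term i ht'; rewrite hi opprB addrC subrK.
  have : 1 <= c * (a i ^+ 2 / sg ^+ 2).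
    rewrite mulrA -/q ler_pdivlMr; last exact: exprn_gt0.
    rewrite mul1r; nra.
  move=> h1 h2; have h3 := hpos _ ht.
  have : (1 < 1 :> R) by lra.
  by rewrite ltxx.
move=> b b0.
pose e i := d i - d k.
have -> : \sum_i (d i - d k) ^+ 2 * b i ^+ 2 = \sum_i (e i) ^+ 2 * b i ^+ 2 by [].
apply: (@lim_lemma _ _ (\sum_i e i * b i ^+ 2) (\sum_i b i ^+ 2)).
- apply: sumr_ge0 => i _; apply: mulr_ge0; last exact: sqr_ge0.
  by rewrite /e subr_ge0.
- by apply: sumr_ge0 => i _; exact: sqr_ge0.
move=> s s0.
have ht : d k - s < d k by lra.
have ht' : forall j, d k - s < d j by move=> j; have := hk j; lra.
apply: (le_trans (CSf ht' (ltW (hpos _ ht)) b)).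
rewrite le_eqVlt; apply/orP; left; apply/eqP.
rewrite mulr_sumr mulr_sumr -big_split /= mulr_sumr -big_split /=.
by apply: eq_bigr => i _; rewrite /e; ring.
Qed.
End Scal2.
Section Cpx.
Variable R : rcfType.
Lemma conjE (z : R[i]) : Num.conj z = Complex (complex.Re z) (- complex.Im z).
Proof. by case: z. Qed.
Lemma normc2 (z : R[i]) : normc z ^+ 2 = complex.Re z ^+ 2 + complex.Im z ^+ 2.
Proof. case: z => x y /=; rewrite sqr_sqrtr //; apply: addr_ge0; exact: sqr_ge0. Qed.
Lemma normc_ge0 (z : R[i]) : 0 <= normc z.
Proof. case: z => x y /=; exact: sqrtr_ge0. Qed.
Lemma mulconj (z : R[i]) : Num.conj z * z = (normc z ^+ 2)%:C.
Proof. rewrite normc2; case: z => x y /=; rewrite [RHS]/real_complex_def; congr Complex; ring. Qed.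
Lemma normc_conj (z : R[i]) : normc (Num.conj z) = normc z.
Proof. by case: z => x y /=; rewrite sqrrN. Qed.
Lemma realCM (x y : R) : x%:C * y%:C = (x * y)%:C.
Proof. rewrite /real_complex_def /=; congr Complex; ring. Qed.
Lemma ReD (x y : R[i]) : complex.Re (x + y) = complex.Re x + complex.Re y.
Proof. by case: x; case: y. Qed.
Lemma ImD (x y : R[i]) : complex.Im (x + y) = complex.Im x + complex.Im y.
Proof. by case: x; case: y. Qed.
Lemma Re_sum (l : nat) (F : 'I_l -> R[i]) : complex.Re (\sum_i F i) = \sum_i complex.Re (F i).
Proof. by apply: (big_morph _ ReD). Qed.
Lemma Im_sum (l : nat) (F : 'I_l -> R[i]) : complex.Im (\sum_i F i) = \sum_i complex.Im (F i).
Proof. by apply: (big_morph _ ImD). Qed.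
Lemma normc_sum (l : nat) (F : 'I_l -> R[i]) : normc (\sum_i F i) <= \sum_i normc (F i).
Proof.
elim/big_ind2: _ => //; first by rewrite normc0.
move=> x1 x2 y1 y2 h1 h2; apply: le_trans (le_normcD _ _) _; exact: lerD.
Qed.
Lemma ReX (d a b N : R) : complex.Re ((d%:C - Complex a b) ^+ 2 * N%:C) = ((d - a) ^+ 2 - b ^+ 2) * N.
Proof. rewrite expr2 /=; ring. Qed.
Lemma ImX (d a b N : R) : complex.Im ((d%:C - Complex a b) ^+ 2 * N%:C) = - (2 * (d - a) * b) * N.
Proof. rewrite expr2 /=; ring. Qed.

Lemma core_bound (x b p q n r : R) : 0 < n -> 0 <= q -> 0 <= r -> r <= p ->
  (q = 0 -> p = 0) -> p - 2 * x * q + x ^+ 2 * n - b ^+ 2 * n = r ->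
  b * (q - x * n) = 0 -> 0 <= x /\ (x = 0 -> b = 0).
Proof.
move=> n0 q0 r0 rp qp hre him.
have [b0|bn0] := eqVneq b 0.
  split => //; rewrite leNgt; apply/negP => xn.
  move: hre; rewrite b0 expr0n /= mul0r subr0 => hre.
  have h1 : x * q <= 0 by rewrite mulr_le0_ge0 // ltW.
  have h2 : 0 < x ^+ 2 * n by apply: mulr_gt0 => //; rewrite lt0r sqr_ge0 andbT sqrf_eq0 ltr0_neq0.
  have h3 : x ^+ 2 * n = r - p + 2 * (x * q) by rewrite -hre; ring.
  have : (0 < 0 :> R) by lra.
  by rewrite ltxx.
move: him => /eqP; rewrite mulf_eq0 (negbTE bn0) /= subr_eq0 => /eqP hq.
have x0 : 0 <= x.
  rewrite leNgt; apply/negP => xn.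
  have : x * n < 0 by rewrite pmulr_llt0.
  rewrite -hq => h; have : (0 < 0 :> R) by lra.
  by rewrite ltxx.
split => // hx0.
have q00 : q = 0 by rewrite hq hx0 mul0r.
have p0 := qp q00.
move: hre; rewrite p0 q00 hx0 => hre.
have h2 : 0 < b ^+ 2 * n by apply: mulr_gt0 => //; rewrite lt0r sqr_ge0 andbT sqrf_eq0.
have h3 : b ^+ 2 * n = - r by rewrite -hre; ring.
have : (0 < 0 :> R) by lra.
by rewrite ltxx.
Qed.
End Cpx.
Section Coord.
Variable R : rcfType.
Variables (l : nat) (d : 'I_l -> R) (h : 'I_l -> R[i]) (c s : R).
Hypothesis c_gt0 : 0 < c.
Hypothesis P1 : forall i, s <= d i.
Hypothesis P2 : forall b : 'I_l -> R, (forall i, 0 <= b i) ->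
      c * (\sum_i normc (h i) * b i) ^+ 2 <= \sum_i (d i - s) ^+ 2 * b i ^+ 2.

Definition kk (y : 'I_l -> R[i]) := \sum_j Num.conj (h j) * y j.
Definition qep_coord (mu : R[i]) (y : 'I_l -> R[i]) :=
  forall i, ((d i)%:C - mu) ^+ 2 * y i = c%:C * h i * kk y.

Lemma sum_eq mu y : qep_coord mu y ->
  \sum_i ((d i)%:C - mu) ^+ 2 * (normc (y i) ^+ 2)%:C = (c * normc (kk y) ^+ 2)%:C.
Proof.
move=> hq.
transitivity (\sum_i Num.conj (y i) * (((d i)%:C - mu) ^+ 2 * y i)).
  by apply: eq_bigr => i _; rewrite -mulconj; ring.
under eq_bigr do rewrite hq.
have -> : \sum_i Num.conj (y i) * (c%:C * h i * kk y) = c%:C * kk y * \sum_i Num.conj (y i) * h i.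
  by rewrite mulr_sumr; apply: eq_bigr => i _; ring.
have -> : \sum_i Num.conj (y i) * h i = Num.conj (kk y).
  rewrite /kk rmorph_sum; apply: eq_bigr => i _.
  by rewrite rmorphM /= conjCK mulrC.
by rewrite -mulrA (mulrC (kk y)) mulconj realCM.
Qed.

Lemma coord_bound mu y : (exists i, y i != 0) -> qep_coord mu y ->
  s <= complex.Re mu /\ (complex.Re mu = s -> mu = s%:C).
Proof.
move=> [i0 yi0] hq.
have se := sum_eq hq.
set N := fun i => normc (y i) ^+ 2.
set r := c * normc (kk y) ^+ 2.
set p := \sum_i (d i - s) ^+ 2 * N i.
set q := \sum_i (d i - s) * N i.
set n := \sum_i N i.
have N0 : forall i, 0 <= N i by move=> i; exact: sqr_ge0.
have n0 : 0 < n.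
  have : 0 < N i0.
    rewrite /N lt0r sqr_ge0 andbT sqrf_eq0; apply/negP => /eqP /eq0_normc h0.
    by rewrite h0 eqxx in yi0.
  move=> h1; rewrite /n (bigD1 i0) //=; apply: (lt_le_trans h1).
  by rewrite lerDl; apply: sumr_ge0.
have q0 : 0 <= q by apply: sumr_ge0 => i _; apply: mulr_ge0 => //; rewrite subr_ge0.
have r0 : 0 <= r by apply: mulr_ge0; [exact: ltW | exact: sqr_ge0].
have rp : r <= p.
  have := P2 (fun i => normc_ge0 (y i)).
  set S := \sum_i normc (h i) * normc (y i).
  have hk : normc (kk y) <= S.
    apply: le_trans (normc_sum _) _; apply: ler_sum => i _.
    by rewrite normcM normc_conj.
  have hk0 := normc_ge0 (kk y).
  move=> h1; apply: le_trans _ h1.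
  rewrite /r; apply: ler_wpM2l; first exact: ltW.
  rewrite ler_sqr //; exact: le_trans hk.
have qp : q = 0 -> p = 0.
  move=> /eqP; rewrite psumr_eq0 => [/allP hall|i _]; last first.
    by apply: mulr_ge0 => //; rewrite subr_ge0.
  rewrite /p big1 // => i _.
  have := hall i (mem_index_enum i); rewrite implyTb => /eqP h1.
  by rewrite expr2 -mulrA h1 mulr0.
case: mu se hq => a b se hq /=.
have hre : \sum_i ((d i - a) ^+ 2 - b ^+ 2) * N i = r.
  rewrite -[RHS]/(complex.Re (r%:C)) -se Re_sum; apply: eq_bigr => i _; by rewrite ReX.
have him : \sum_i - (2 * (d i - a) * b) * N i = 0.
  rewrite -[RHS]/(complex.Im (r%:C)) -se Im_sum; apply: eq_bigr => i _; by rewrite ImX.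
have hre' : p - 2 * (a - s) * q + (a - s) ^+ 2 * n - b ^+ 2 * n = r.
  rewrite -hre /p /q /n !mulr_sumr -sumrB -big_split -sumrB /=.
  by apply: eq_bigr => i _; rewrite /N; ring.
have him' : b * (q - (a - s) * n) = 0.
  have -> : b * (q - (a - s) * n) = - (2^-1) * \sum_i - (2 * (d i - a) * b) * normc (y i) ^+ 2.
    rewrite /q /n mulr_sumr -sumrB mulr_sumr mulr_sumr; apply: eq_bigr => i _; rewrite /N.
    by field.
  by rewrite him mulr0.
have [h1 h2] := core_bound n0 q0 r0 rp qp hre' him'.
split; first by move: h1; rewrite subr_ge0.
move=> hs; rewrite (h2 _) ?hs ?subrr //.
Qed.
End Coord.
Section M.
Variable R : rcfType.
Variables (l : nat) (H : 'M[R]_l) (g0 : 'cV[R]_l) (gamma : R).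

Local Notation C := (R[i]).
Local Notation Hc := (toCmx H).
Local Notation gc := (toCmx g0).
Local Notation cc := (gamma ^-2).

Lemma Hc_herm : H^T = H -> Hc \is hermsymmx.
Proof.
move=> HT.
apply/is_hermitianmxP; rewrite expr0 scale1r; apply/matrixP => i j; rewrite !mxE.
have hij : H j i = H i j by rewrite -{1}HT mxE.
by rewrite hij conjE /= oppr0.
Qed.

Lemma gcT : gc^T = gc ^t Num.conj.
Proof. by apply/matrixP => i j; rewrite !mxE conjE /= oppr0. Qed.

Variables (U : 'M[C]_l) (dl : 'rV[C]_l) (dd : 'I_l -> R).
Local Notation V := (U ^t Num.conj).
Hypothesis UV : U *m V = 1%:M.
Hypothesis VU : V *m U = 1%:M.
Hypothesis Hc_spec : Hc = V *m diag_mx dl *m U.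
Hypothesis dlE : forall i, dl 0 i = (dd i)%:C.

Definition hh (i : 'I_l) : C := (U *m gc) i 0.

Lemma shift_spec (mu : C) : Hc - mu%:M = V *m (diag_mx dl - mu%:M) *m U.
Proof.
by rewrite mulmxBr mulmxBl Hc_spec mul_mx_scalar -scalemxAl VU scalemx1.
Qed.

Lemma diag_sub (mu : C) : diag_mx dl - mu%:M = diag_mx (\row_j (dl 0 j - mu)).
Proof.
apply/matrixP => i j; rewrite !mxE; case: eqP => _ /=; by rewrite ?mulr1n ?mulr0n ?subr0.
Qed.

Lemma entry_iff (mu : C) (y : 'cV[C]_l) :
  (diag_mx dl - mu%:M) *m ((diag_mx dl - mu%:M) *m y) =
     (Complex cc 0) *: ((U *m gc) *m ((U *m gc) ^t Num.conj *m y)) <->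
  qep_coord dd hh cc mu (fun i => y i 0).
Proof.
rewrite diag_sub !mul_diag_mx.
have le : forall i, (\matrix_(i0, j) ((\row_j0 (dl 0 j0 - mu)) 0 i0 *
      (\matrix_(i1, j0) ((\row_j1 (dl 0 j1 - mu)) 0 i1 * y i1 j0)) i0 j)) i 0
   = ((dd i)%:C - mu) ^+ 2 * y i 0.
  by move=> i; rewrite !mxE dlE expr2 mulrA.
have re : forall i, ((Complex cc 0) *: ((U *m gc) *m ((U *m gc) ^t Num.conj *m y))) i 0
   = cc%:C * hh i * kk hh (fun i => y i 0).
  move=> i; rewrite !mxE big_ord1 !mxE mulrA /hh /kk mxE; congr (_ * _ * _).
  by apply: eq_bigr => j _; rewrite !mxE.
split.
  move=> /matrixP heq i; have := heq i 0; by rewrite le re.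
move=> hq; apply/matrixP => i j; rewrite ord1 le re; exact: hq.
Qed.

Lemma coord_iff (mu : C) (w : 'cV[C]_l) :
  (Hc - mu%:M) *m (Hc - mu%:M) *m w = (Complex cc 0) *: (gc *m gc^T *m w) <->
  qep_coord dd hh cc mu (fun i => (U *m w) i 0).
Proof.
set y := U *m w.
have hw : w = V *m y by rewrite /y mulmxA VU mul1mx.
have lhs : (Hc - mu%:M) *m (Hc - mu%:M) *m w =
    V *m ((diag_mx dl - mu%:M) *m ((diag_mx dl - mu%:M) *m y)).
  rewrite shift_spec hw !mulmxA -!(mulmxA _ U V) UV !mulmx1 -!mulmxA.
  done.
have rhs : (Complex cc 0) *: (gc *m gc^T *m w) =
    V *m ((Complex cc 0) *: ((U *m gc) *m ((U *m gc) ^t Num.conj *m y))).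
  rewrite -scalemxAr; congr (_ *: _).
  rewrite gcT hw trmx_mul map_mxM !mulmxA VU mul1mx.
  done.
rewrite lhs rhs -entry_iff; split; last by move=> ->.
by move=> /(congr1 (mulmx U)); rewrite !mulmxA UV !mul1mx.
Qed.
End M.
Section Real.
Variable R : rcfType.
Variables (l : nat) (H : 'M[R]_l) (g0 : 'cV[R]_l) (gamma : R).
Local Notation C := (R[i]).
Local Notation cc := (gamma ^-2).

Lemma toCmxE m n (A : 'M[R]_(m, n)) : toCmx A = map_mx (real_complex R) A.
Proof. by []. Qed.

Lemma toCmx_eqn (lam : R) (w : 'cV[R]_l) :
  toCmx ((H - lam%:M) *m (H - lam%:M) *m w - cc *: (g0 *m g0^T *m w)) =
  (toCmx H - (Complex lam 0)%:M) *m (toCmx H - (Complex lam 0)%:M) *m toCmx w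
   - (Complex cc 0) *: (toCmx g0 *m (toCmx g0)^T *m toCmx w).
Proof.
rewrite !toCmxE map_mxB map_mxZ !map_mxM map_mxB map_scalar_mx map_trmx.
done.
Qed.

Lemma Re_realM (x : R) (z : C) : complex.Re (x%:C * z) = x * complex.Re z.
Proof. by case: z => u v /=; ring. Qed.
Lemma Im_realM (x : R) (z : C) : complex.Im (x%:C * z) = x * complex.Im z.
Proof. by case: z => u v /=; ring. Qed.

Lemma real_kernel (M : 'M[R]_l) (w : 'cV[C]_l) : toCmx M *m w = 0 ->
  M *m map_mx (@complex.Re R) w = 0 /\ M *m map_mx (@complex.Im R) w = 0.
Proof.
move=> /matrixP h; split; apply/matrixP => i j; have := h i j; rewrite !mxE => e.
  have e' := congr1 (@complex.Re R) e; rewrite Re_sum /= in e'.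
  by apply: (etrans _ e'); apply: eq_bigr => k _; rewrite !mxE Re_realM.
have e' := congr1 (@complex.Im R) e; rewrite Im_sum /= in e'.
by apply: (etrans _ e'); apply: eq_bigr => k _; rewrite !mxE Im_realM.
Qed.

Lemma real_extract (s : R) (w : 'cV[C]_l) : w != 0 ->
  (toCmx H - (Complex s 0)%:M) *m (toCmx H - (Complex s 0)%:M) *m w
      = (Complex cc 0) *: (toCmx g0 *m (toCmx g0)^T *m w) ->
  pqep_feasible H g0 gamma s.
Proof.
move=> wn0 heq.
set M := (H - s%:M) *m (H - s%:M) - cc *: (g0 *m g0^T).
have hM : forall v : 'cV[R]_l, M *m v = (H - s%:M) *m (H - s%:M) *m v - cc *: (g0 *m g0^T *m v).
  by move=> v; rewrite /M (mulmxBl ((H - s%:M) *m (H - s%:M))) -scalemxAl.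
have hMw : toCmx M *m w = 0.
  rewrite /M !toCmxE map_mxB map_mxZ !map_mxM map_mxB map_scalar_mx -map_trmx.
  apply/eqP; rewrite mulmxBl -scalemxAl subr_eq0; apply/eqP; exact: heq.
have [h1 h2] := real_kernel hMw.
have fromM : forall v : 'cV[R]_l, v != 0 -> M *m v = 0 -> pqep_feasible H g0 gamma s.
  by move=> v vn0 hv; exists v; split => //; apply/eqP; rewrite -subr_eq0 -hM hv.
have [wr0|wrn0] := eqVneq (map_mx (@complex.Re R) w) 0; last exact: fromM _ wrn0 h1.
have [wi0|win0] := eqVneq (map_mx (@complex.Im R) w) 0; last exact: fromM _ win0 h2.
exfalso; move/negP: wn0; apply; apply/eqP/matrixP => i j.
have := congr1 (fun m : 'cV[R]_l => m i j) wr0; have := congr1 (fun m : 'cV[R]_l => m i j) wi0.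
rewrite !mxE; case: (w i j) => u v /= -> ->; done.
Qed.

Lemma real_embed (lam : R) : pqep_feasible H g0 gamma lam ->
  qep_eigenvalue H g0 gamma (Complex lam 0).
Proof.
move=> [w [wn0 heq]]; exists (toCmx w); split.
  apply: contra wn0 => /eqP /matrixP h; apply/eqP/matrixP => i j.
  by have := h i j; rewrite !mxE => -[].
apply/eqP; rewrite -subr_eq0 -toCmx_eqn heq subrr.
by rewrite toCmxE map_mx0.
Qed.
End Real.
Section F.
Variable R : rcfType.
Variables (l : nat) (H : 'M[R]_l) (g0 : 'cV[R]_l) (gamma : R).
Local Notation C := (R[i]).
Local Notation Hc := (toCmx H).
Local Notation gc := (toCmx g0).
Local Notation cc := (gamma ^-2).
Variables (U : 'M[C]_l) (dl : 'rV[C]_l) (dd : 'I_l -> R).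
Local Notation V := (U ^t Num.conj).
Hypothesis UV : U *m V = 1%:M.
Hypothesis VU : V *m U = 1%:M.
Hypothesis Hc_spec : Hc = V *m diag_mx dl *m U.
Hypothesis dlE : forall i, dl 0 i = (dd i)%:C.
Hypothesis gamma_gt0 : 0 < gamma.
Local Notation h := (hh g0 U).

Lemma cc_gt0 : 0 < cc.
Proof. by rewrite invr_gt0 exprn_gt0. Qed.

Lemma eig_bound s : (forall i, s <= dd i) ->
  (forall b : 'I_l -> R, (forall i, 0 <= b i) ->
      cc * (\sum_i normc (h i) * b i) ^+ 2 <= \sum_i (dd i - s) ^+ 2 * b i ^+ 2) ->
  forall mu, qep_eigenvalue H g0 gamma mu ->
  s <= complex.Re mu /\ (complex.Re mu = s -> mu = Complex s 0).
Proof.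
move=> P1 P2 mu [w [wn0 heq]].
have hq := (coord_iff g0 gamma UV VU Hc_spec dlE mu w).1 heq.
apply: (coord_bound cc_gt0 P1 P2 _ hq).
have hUw : U *m w != 0.
  apply: contra wn0 => /eqP h0; by rewrite -[w]mul1mx -VU -mulmxA h0 mulmx0.
apply: NNPP => hn; move/negP: hUw; apply; apply/eqP/matrixP => i j.
rewrite ord1 [RHS]mxE; apply/eqP; apply/negPn/negP => hne; apply: hn; by exists i.
Qed.

Lemma feas_from_coord s (z : 'I_l -> C) : (exists i, z i != 0) ->
  qep_coord dd h cc (s%:C) z -> qep_eigenvalue H g0 gamma (Complex s 0).
Proof.
move=> [i0 zi0] hq.
set zc : 'cV[C]_l := \col_i z i.
have hU : U *m (V *m zc) = zc by rewrite mulmxA UV mul1mx.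
exists (V *m zc); split.
  apply/negP => /eqP h0; move: hU; rewrite h0 mulmx0 => /matrixP /(_ i0 0).
  by rewrite !mxE => /esym /eqP; rewrite (negbTE zi0).
apply/(coord_iff g0 gamma UV VU Hc_spec dlE).
rewrite hU; move=> i; rewrite /zc mxE; have := hq i.
rewrite /qep_coord; congr (_ = _ * _ * _).
by rewrite /kk; apply: eq_bigr => j _; rewrite mxE.
Qed.
End F.
Section G.
Variable R : rcfType.
Variables (l : nat) (H : 'M[R]_l) (g0 : 'cV[R]_l) (gamma : R).
Local Notation C := (R[i]).
Local Notation Hc := (toCmx H).
Local Notation cc := (gamma ^-2).
Variables (U : 'M[C]_l) (dl : 'rV[C]_l) (dd : 'I_l -> R).
Local Notation V := (U ^t Num.conj).
Hypothesis UV : U *m V = 1%:M.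
Hypothesis VU : V *m U = 1%:M.
Hypothesis Hc_spec : Hc = V *m diag_mx dl *m U.
Hypothesis dlE : forall i, dl 0 i = (dd i)%:C.
Hypothesis gamma_gt0 : 0 < gamma.
Local Notation h := (hh g0 U).

Lemma main_abstract (i0 : 'I_l) :
  exists lamS : R,
    qep_eigenvalue H g0 gamma (Complex lamS 0) /\
    (forall mu : R[i], qep_eigenvalue H g0 gamma mu ->
        lamS <= @complex.Re R mu /\ (@complex.Re R mu = lamS -> mu = Complex lamS 0)) /\
    pqep_feasible H g0 gamma lamS /\
    (forall lam : R, pqep_feasible H g0 gamma lam -> lamS <= lam).
Proof.
have [k _ hk] := @arg_minP _ _ _ i0 xpredT dd isT.
have c0 := cc_gt0 gamma_gt0.
have [s [P1 [P2 disj]]] := @exists_s R l dd (fun i => normc (h i)) cc c0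
   k (fun i => hk i isT).
have hbound := eig_bound UV VU Hc_spec dlE gamma_gt0 P1 P2.
have heig : qep_eigenvalue H g0 gamma (Complex s 0).
  case: disj => [[hs hf] | [hsk ha0]].
    set S := \sum_i normc (h i) ^+ 2 / (dd i - s) ^+ 2.
    have hS : cc * S = 1 by [].
    have hxC : forall i, ((dd i - s) ^+ 2)%:C != 0 :> C.
      move=> i; apply/negP => /eqP [] /eqP; rewrite expf_eq0 /= subr_eq0 gt_eqF //.
    pose z i := h i / ((dd i - s) ^+ 2)%:C.
    have kz : kk h z = S%:C.
      rewrite /kk /S rmorph_sum; apply: eq_bigr => i _.
      by rewrite /z mulrA mulconj fmorph_div.
    apply: (@feas_from_coord _ _ H g0 gamma U dl dd UV VU Hc_spec dlE s z).
      have [i hi] : exists i, h i != 0.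
        apply: NNPP => hn.
        have S0 : S = 0.
          rewrite /S big1 // => i _.
          have -> : h i = 0 by apply/eqP; apply/negPn/negP => hne; apply: hn; exists i.
          by rewrite normc0 expr0n /= mul0r.
        by move: hS; rewrite S0 mulr0 => /eqP; rewrite eq_sym oner_eq0.
      by exists i; rewrite /z mulf_neq0 // invr_eq0 hxC.
    move=> i; rewrite kz -rmorphB -rmorphXn /z mulrC divfK //.
    by rewrite mulrAC realCM hS mul1r.
  apply: (@feas_from_coord _ _ H g0 gamma U dl dd UV VU Hc_spec dlE s (fun i => (i == k)%:R)).
    by exists k; rewrite eqxx oner_neq0.
  have hk0 : h k = 0 by apply: eq0_normc; apply: ha0.
  move=> i; rewrite /kk (bigD1 k) //= big1 ?addr0; last first.
    by move=> j /negbTE ->; rewrite mulr0.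
  rewrite eqxx mulr1 hk0 rmorph0 mulr0.
  case: eqP => [->|_]; last by rewrite mulr0.
  by rewrite hsk subrr expr0n /= mul0r.
exists s; split; first exact: heig.
split; first exact: hbound.
split.
  by case: heig => w [wn0 heq]; exact: real_extract wn0 heq.
move=> lam /real_embed /hbound [] //.
Qed.
End G.
Section Spec.
Variable R : rcfType.
Variables (l : nat) (H : 'M[R]_l).
Hypothesis HT : H^T = H.
Local Notation Hc := (toCmx H).
Definition Usp := spectralmx Hc.
Definition dlsp := spectral_diag Hc.
Definition ddsp (i : 'I_l) : R := complex.Re (dlsp 0 i).

Lemma Usp_UV : Usp *m Usp ^t Num.conj = 1%:M.
Proof. exact/unitarymxP/spectral_unitarymx. Qed.
Lemma Usp_VU : Usp ^t Num.conj *m Usp = 1%:M.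
Proof.
by have := mulmxKtV (1%:M : 'M[R[i]]_l) (spectral_unitarymx Hc) erefl; rewrite mul1mx.
Qed.
Lemma Usp_spec : Hc = Usp ^t Num.conj *m diag_mx dlsp *m Usp.
Proof.
rewrite /Usp -invmx_unitary; last exact: spectral_unitarymx.
exact/orthomx_spectralP/hermitian_normalmx/Hc_herm.
Qed.
Lemma dlsp_E i : dlsp 0 i = (ddsp i)%:C.
Proof.
have /mxOverP /(_ 0 i) hr := hermitian_spectral_diag_real (Hc_herm HT).
by rewrite /ddsp RRe_real.
Qed.
End Spec.

Local Close Scope sesquilinear_scope.
Local Close Scope complex_scope.

Theorem theorem2p7 (R : rcfType) (l : nat) (H : 'M[R]_l) (g0 : 'cV[R]_l) (gamma : R) :
  H^T = H -> g0 != 0 -> 0 < gamma ->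
  exists lamS : R,
    (* lamS is a (real) eigenvalue of the QEP *)
    qep_eigenvalue H g0 gamma (Complex lamS 0) /\
    (* it is the leftmost one, and every eigenvalue with the smallest real part equals it *)
    (forall mu : R[i], qep_eigenvalue H g0 gamma mu ->
        lamS <= @complex.Re R mu /\ (@complex.Re R mu = lamS -> mu = Complex lamS 0)) /\
    (* consequence: lamS is the optimal value of pQEPmin (attained) *)
    pqep_feasible H g0 gamma lamS /\
    (forall lam : R, pqep_feasible H g0 gamma lam -> lamS <= lam).
Proof.
move=> HT g0n0 gpos.
case: (ltnP 0 l) => [lpos|hl]; last first.
  exfalso; move/negP: g0n0; apply; apply/eqP/matrixP => i j.
  by have := leq_trans (ltn_ord i) hl.
exact: (@main_abstract R l H g0 gamma (Usp H) (dlsp H) (ddsp H)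
   (Usp_UV H) (Usp_VU H) (Usp_spec HT) (dlsp_E HT) gpos (Ordinal lpos)).
Qed.
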